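(* For $n=0,1,2,\ldots$ let $R_n=\sum_{k=0}^n\binom{n}{k}\binom{n+k}{k}\frac{1}{2k-1}$, let $r_n=R_{n+1}/R_n$, and for $n\geq 1$ let $$b_n=3+2\sqrt{2}-\frac{3(41\sqrt{2}+58)}{(14\sqrt{2}+20)n}=\left(3-\frac{9}{2n}\right)+\sqrt{2}\left(2-\frac{3}{n}\right).$$ Then for all $n\geq 3$, $b_n<r_n<b_{n+1}$. *)

(* Defs.v *)
From Stdlib Require Import Reals Lra Lia.
Open Scope R_scope.

Definition Rseq (n : nat) : R :=
  sum_f_R0 (fun k => C n k * C (n + k) k / (2 * INR k - 1)) n.

Definition rseq (n : nat) : R := Rseq (S n) / Rseq n.

Definition bseq (n : nat) : R :=
  3 + 2 * sqrt 2 - 3 * (41 * sqrt 2 + 58) / ((14 * sqrt 2 + 20) * INR n).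

(* Main.v *)
Require Import Defs.
From Stdlib Require Import Reals Lra Lia Psatz Arith Factorial.
Open Scope R_scope.

Definition X (n k : nat) : R :=
  INR (fact (n+k)) / (INR (fact k) ^ 2 * INR (fact (n+3-k))).

Definition T (m k : nat) : R :=
  if (k <=? m)%nat then C m k * C (m + k) k / (2 * INR k - 1) else 0.

Definition G (n k : nat) : R :=
  if (k <=? n+3)%nat then -4 * (INR n + 2) * INR k ^ 2 * X n k else 0.

Lemma twoK1_neq (k : nat) : 2 * INR k - 1 <> 0.
Proof.
  destruct k as [|k]. simpl. lra.
  rewrite S_INR. pose proof (pos_INR k). lra.
Qed.

Lemma Cprod (m k : nat) : (k <= m)%nat ->
  C m k * C (m + k) k = INR (fact (m+k)) / (INR (fact k) ^ 2 * INR (fact (m-k))).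
Proof.
  intros H. unfold C. replace (m + k - k)%nat with m by lia.
  pose proof (INR_fact_neq_0 m). pose proof (INR_fact_neq_0 k).
  pose proof (INR_fact_neq_0 (m-k)).
  field. repeat split; auto.
Qed.

Ltac factnz := repeat match goal with
  | |- context [INR (fact ?a)] =>
    let H := fresh in assert (H := INR_fact_neq_0 a);
    generalize dependent (INR (fact a)) end.

Lemma Y0 (n k : nat) : (k <= n)%nat ->
  C n k * C (n + k) k = X n k *
   ((INR n + 1 - INR k) * (INR n + 2 - INR k) * (INR n + 3 - INR k)).
Proof.
  intros H. pose proof (le_INR _ _ H) as HH. rewrite ?plus_INR in HH. simpl INR in HH.
  rewrite Cprod by lia. unfold X.
  replace (n + 3 - k)%nat with (S (S (S (n - k)))) by lia.
  rewrite !fact_simpl, !mult_INR, !S_INR, minus_INR by lia.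
  factnz. intros. field. repeat split; auto; lra.
Qed.

Lemma Y1 (n k : nat) : (k <= n + 1)%nat ->
  C (n+1) k * C (n + 1 + k) k = X n k *
   ((INR n + INR k + 1) * (INR n + 2 - INR k) * (INR n + 3 - INR k)).
Proof.
  intros H. pose proof (le_INR _ _ H) as HH. rewrite ?plus_INR in HH. simpl INR in HH.
  rewrite Cprod by lia. unfold X.
  replace (n + 3 - k)%nat with (S (S (n + 1 - k))) by lia.
  replace (n + 1 + k)%nat with (S (n + k)) by lia.
  rewrite !fact_simpl, !mult_INR, !S_INR, minus_INR by lia.
  rewrite !plus_INR. simpl INR.
  factnz. intros. field. repeat split; auto; lra.
Qed.

Lemma Y2 (n k : nat) : (k <= n + 2)%nat ->
  C (n+2) k * C (n + 2 + k) k = X n k *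
   ((INR n + INR k + 1) * (INR n + INR k + 2) * (INR n + 3 - INR k)).
Proof.
  intros H. pose proof (le_INR _ _ H) as HH. rewrite ?plus_INR in HH. simpl INR in HH.
  rewrite Cprod by lia. unfold X.
  replace (n + 3 - k)%nat with (S (n + 2 - k)) by lia.
  replace (n + 2 + k)%nat with (S (S (n + k))) by lia.
  rewrite !fact_simpl, !mult_INR, !S_INR, minus_INR by lia.
  rewrite !plus_INR. simpl INR.
  factnz. intros. field. repeat split; auto; lra.
Qed.

Lemma Y3 (n k : nat) : (k <= n + 3)%nat ->
  C (n+3) k * C (n + 3 + k) k = X n k *
   ((INR n + INR k + 1) * (INR n + INR k + 2) * (INR n + INR k + 3)).
Proof.
  intros H. pose proof (le_INR _ _ H) as HH. rewrite ?plus_INR in HH. simpl INR in HH.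
  rewrite Cprod by lia. unfold X.
  replace (n + 3 + k)%nat with (S (S (S (n + k)))) by lia.
  rewrite !fact_simpl, !mult_INR, !S_INR.
  rewrite !plus_INR. simpl INR.
  factnz. intros. field. repeat split; auto; lra.
Qed.

Definition P0 n k := (INR n + 1 - INR k) * (INR n + 2 - INR k) * (INR n + 3 - INR k).
Definition P1 n k := (INR n + INR k + 1) * (INR n + 2 - INR k) * (INR n + 3 - INR k).
Definition P2 n k := (INR n + INR k + 1) * (INR n + INR k + 2) * (INR n + 3 - INR k).
Definition P3 n k := (INR n + INR k + 1) * (INR n + INR k + 2) * (INR n + INR k + 3).

Lemma T0 n k : (k <= n + 3)%nat -> T n k = X n k * P0 n k / (2 * INR k - 1).
Proof.
  intros H. pose proof (twoK1_neq k) as Hk. unfold T, P0. destruct (k <=? n)%nat eqn:E.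
  - apply Nat.leb_le in E. rewrite Y0 by lia. reflexivity.
  - apply Nat.leb_gt in E.
    assert (k = n+1 \/ k = n+2 \/ k = n+3)%nat as [->|[->| ->]] by lia;
    rewrite plus_INR in *; simpl INR in *; field; intro Hc; apply Hk; lra.
Qed.

Lemma T1 n k : (k <= n + 3)%nat -> T (S n) k = X n k * P1 n k / (2 * INR k - 1).
Proof.
  intros H. pose proof (twoK1_neq k) as Hk. unfold T, P1. replace (S n) with (n+1)%nat by lia.
  destruct (k <=? n+1)%nat eqn:E.
  - apply Nat.leb_le in E. rewrite Y1 by lia. reflexivity.
  - apply Nat.leb_gt in E.
    assert (k = n+2 \/ k = n+3)%nat as [->| ->] by lia;
    rewrite plus_INR in *; simpl INR in *; field; intro Hc; apply Hk; lra.
Qed.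

Lemma T2 n k : (k <= n + 3)%nat -> T (S (S n)) k = X n k * P2 n k / (2 * INR k - 1).
Proof.
  intros H. pose proof (twoK1_neq k) as Hk. unfold T, P2. replace (S (S n)) with (n+2)%nat by lia.
  destruct (k <=? n+2)%nat eqn:E.
  - apply Nat.leb_le in E. rewrite Y2 by lia. reflexivity.
  - apply Nat.leb_gt in E.
    assert (k = n+3)%nat as -> by lia.
    rewrite plus_INR in *; simpl INR in *; field; intro Hc; apply Hk; lra.
Qed.

Lemma T3 n k : (k <= n + 3)%nat -> T (S (S (S n))) k = X n k * P3 n k / (2 * INR k - 1).
Proof.
  intros H. unfold T, P3. replace (S (S (S n))) with (n+3)%nat by lia.
  destruct (k <=? n+3)%nat eqn:E.
  - apply Nat.leb_le in E. rewrite Y3 by lia. reflexivity.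
  - apply Nat.leb_gt in E. lia.
Qed.

Lemma Gk n k : (k <= n + 3)%nat -> G n k = -4 * (INR n + 2) * INR k ^ 2 * X n k.
Proof.
  intros H. unfold G. destruct (k <=? n+3)%nat eqn:E; auto.
  apply Nat.leb_gt in E. lia.
Qed.

Lemma GSk n k : (k <= n + 3)%nat ->
  G n (S k) = -4 * (INR n + 2) * X n k * (INR n + INR k + 1) * (INR n + 3 - INR k).
Proof.
  intros H. unfold G. destruct (S k <=? n+3)%nat eqn:E.
  - apply Nat.leb_le in E. unfold X.
    replace (n + S k)%nat with (S (n + k)) by lia.
    replace (n + 3 - k)%nat with (S (n + 3 - S k)) by lia.
    rewrite !fact_simpl, !mult_INR, !S_INR, !plus_INR.
    pose proof (pos_INR k). pose proof (le_INR _ _ E) as HE. rewrite S_INR, plus_INR in HE. replace (INR 3) with 3 in HE by (simpl; lra).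
    rewrite minus_INR by lia. rewrite !plus_INR, (S_INR k). replace (INR 3) with 3 by (simpl; lra). replace (INR 2) with 2 by (simpl; lra). factnz. intros. field. repeat split; auto; lra.
  - apply Nat.leb_gt in E. assert (k = n+3)%nat as -> by lia.
    rewrite plus_INR; simpl INR. ring.
Qed.

Lemma perk n k : (k <= n + 3)%nat ->
  -(INR n + 1) * T n k + (7 * INR n + 15) * T (S n) k
  - (7 * INR n + 13) * T (S (S n)) k + (INR n + 3) * T (S (S (S n))) k
  = G n (S k) - G n k.
Proof.
  intros H. rewrite T0, T1, T2, T3, GSk, Gk by lia.
  unfold P0, P1, P2, P3. field. apply twoK1_neq.
Qed.

Lemma sum_lin4 (a b c d : R) (f g h e : nat -> R) (N : nat) :
  sum_f_R0 (fun k => a * f k + b * g k + c * h k + d * e k) N =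
  a * sum_f_R0 f N + b * sum_f_R0 g N + c * sum_f_R0 h N + d * sum_f_R0 e N.
Proof. induction N; simpl; [ring | rewrite IHN; ring]. Qed.

Lemma sum_tele (g : nat -> R) (N : nat) :
  sum_f_R0 (fun k => g (S k) - g k) N = g (S N) - g O.
Proof. induction N; simpl; [ring | rewrite IHN; ring]. Qed.

Lemma sumT m d : sum_f_R0 (T m) (m + d) = Rseq m.
Proof.
  induction d.
  - rewrite Nat.add_0_r. unfold Rseq. apply sum_eq. intros i Hi.
    unfold T. destruct (i <=? m)%nat eqn:E; auto. apply Nat.leb_gt in E. lia.
  - rewrite Nat.add_succ_r. simpl. rewrite IHd. unfold T.
    destruct (S (m + d) <=? m)%nat eqn:E. apply Nat.leb_le in E. lia. ring.
Qed.

Lemma recur n :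
  -(INR n + 1) * Rseq n + (7 * INR n + 15) * Rseq (S n)
  - (7 * INR n + 13) * Rseq (S (S n)) + (INR n + 3) * Rseq (S (S (S n))) = 0.
Proof.
  rewrite <- (sumT n 3), <- (sumT (S n) 2), <- (sumT (S (S n)) 1), <- (sumT (S (S (S n))) 0).
  replace (S n + 2)%nat with (n+3)%nat by lia.
  replace (S (S n) + 1)%nat with (n+3)%nat by lia.
  replace (S (S (S n)) + 0)%nat with (n+3)%nat by lia.
  transitivity (sum_f_R0 (fun k => -(INR n + 1) * T n k + (7 * INR n + 15) * T (S n) k
     + -(7 * INR n + 13) * T (S (S n)) k + (INR n + 3) * T (S (S (S n))) k) (n+3)).
  - rewrite sum_lin4. ring.
  - rewrite (sum_eq _ (fun k => G n (S k) - G n k)).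
    + rewrite sum_tele. unfold G.
      destruct (S (n+3) <=? n+3)%nat eqn:E. apply Nat.leb_le in E. lia.
      destruct (0 <=? n+3)%nat; simpl INR; ring.
    + intros i Hi. rewrite <- perk by lia. ring.
Qed.

Definition bb (M t : R) : R := (6 - M) * (2 * t - 3) / (2 * t).

Lemma lowcore N M : 4 <= N -> 0.17157 < M < 0.171573 -> M * M = 6 * M - 1 ->
  let p0 := M * (2 * N + 2) / (2 * N - 1) in
  (N + 3) * bb M (N + 2) < 7 * N + 13 - p0 * (7 * N + 15 - (N + 1) * p0).
Proof.
  intros HN HM HMM p0. unfold p0, bb.
  apply Rminus_gt_0_lt.
  assert (E : 7 * N + 13 - M * (2 * N + 2) / (2 * N - 1) *
     (7 * N + 15 - (N + 1) * (M * (2 * N + 2) / (2 * N - 1))) -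
     (N + 3) * ((6 - M) * (2 * (N + 2) - 3) / (2 * (N + 2)))
   = ((18 - 180 * N + 18 * N^2) + (219 + 327 * N + 90 * N^2) * M
      + (16 + 56 * N + 72 * N^2 + 40 * N^3 + 8 * N^4) * (M * M - 6 * M + 1))
     / ((2 * N - 1)^2 * (2 * N + 4))).
  { field. lra. }
  rewrite E. replace (M * M - 6 * M + 1) with 0 by lra.
  apply Rdiv_lt_0_compat.
  - assert (0 <= (219 + 327 * N + 90 * N^2) * (M - 0.17157)) by (apply Rmult_le_pos; nra).
    nra.
  - assert (0 < 2 * N - 1) by lra. assert (0 < 2 * N + 4) by lra.
    apply Rmult_lt_0_compat; [apply pow_lt|]; lra.
Qed.

Lemma upcore N M : 4 <= N -> 0.17157 < M < 0.171573 -> M * M = 6 * M - 1 ->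
  let q1 := M * (2 * N + 4) / (2 * N + 1) in
  let p1 := M * (2 * N) / (2 * N - 3) in
  7 * N + 13 - q1 * (7 * N + 15 - (N + 1) * p1) < (N + 3) * bb M (N + 3).
Proof.
  intros HN HM HMM q1 p1. unfold q1, p1, bb.
  apply Rminus_gt_0_lt.
  assert (E : (N + 3) * ((6 - M) * (2 * (N + 3) - 3) / (2 * (N + 3))) -
     (7 * N + 13 - M * (2 * N + 4) / (2 * N + 1) *
     (7 * N + 15 - (N + 1) * (M * (2 * N) / (2 * N - 3))))
   = ((72 + 186 * N + 54 * N^2) + (-1053 - 909 * N - 186 * N^2) * M
      + (- 48 * N - 88 * N^2 - 48 * N^3 - 8 * N^4) * (M * M - 6 * M + 1))
     / ((2 * N + 6) * (2 * N + 1) * (2 * N - 3))).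
  { field. repeat split; lra. }
  rewrite E. replace (M * M - 6 * M + 1) with 0 by lra.
  apply Rdiv_lt_0_compat.
  - assert (0 <= (1053 + 909 * N + 186 * N^2) * (0.171573 - M)) by (apply Rmult_le_pos; nra).
    nra.
  - assert (0 < 2 * N + 6) by lra. assert (0 < 2 * N + 1) by lra. assert (0 < 2 * N - 3) by lra.
    apply Rmult_lt_0_compat; [apply Rmult_lt_0_compat|]; lra.
Qed.

Lemma inv_bb M t : 0 < M < 1 -> 2 <= t -> M * M = 6 * M - 1 ->
  / bb M t = M * (2 * t) / (2 * t - 3).
Proof.
  intros HM Ht HMM. unfold bb.
  assert (H6 : 6 - M = / M) by (field_simplify_eq; lra).
  rewrite H6. field. repeat split; lra.
Qed.

Lemma bb_pos M t : 0 < M < 1 -> 2 <= t -> 0 < bb M t.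
Proof. intros. unfold bb. apply Rdiv_lt_0_compat; [apply Rmult_lt_0_compat|]; lra. Qed.

Lemma step_abs N M a0 a1 a2 a3 :
  4 <= N -> 0.17157 < M < 0.171573 -> M * M = 6 * M - 1 ->
  0 < a0 -> 0 < a1 -> 0 < a2 ->
  (N + 3) * a3 = (7 * N + 13) * a2 - (7 * N + 15) * a1 + (N + 1) * a0 ->
  bb M N < a1 / a0 < bb M (N + 1) -> bb M (N + 1) < a2 / a1 < bb M (N + 2) ->
  bb M (N + 2) < a3 / a2 < bb M (N + 3).
Proof.
  intros HN HM HMM H0 H1 H2 Hrec [Hx1 Hx2] [Hy1 Hy2].
  set (p := a0 / a1). set (q := a1 / a2).
  set (p0 := M * (2 * (N + 1)) / (2 * (N + 1) - 3)).
  set (p1 := M * (2 * N) / (2 * N - 3)).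
  set (q1 := M * (2 * (N + 2)) / (2 * (N + 2) - 3)).
  assert (HM1 : 0 < M < 1) by lra.
  assert (Hp0 : p0 < p).
  { unfold p0, p. rewrite <- inv_bb by lra. replace (a0 / a1) with (/ (a1 / a0)) by (field; lra).
    apply Rinv_lt_contravar; [apply Rmult_lt_0_compat|]; try lra.
    apply Rdiv_lt_0_compat; lra. apply bb_pos; lra. }
  assert (Hp1 : p < p1).
  { unfold p1, p. rewrite <- inv_bb by lra. replace (a0 / a1) with (/ (a1 / a0)) by (field; lra).
    apply Rinv_lt_contravar; [apply Rmult_lt_0_compat|]; try lra.
    apply bb_pos; lra. apply Rdiv_lt_0_compat; lra. }
  assert (Hq0 : q < p0).
  { unfold p0, q. rewrite <- inv_bb by lra. replace (a1 / a2) with (/ (a2 / a1)) by (field; lra).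
    apply Rinv_lt_contravar; [apply Rmult_lt_0_compat|]; try lra.
    apply bb_pos; lra. apply Rdiv_lt_0_compat; lra. }
  assert (Hq1 : q1 < q).
  { unfold q1, q. rewrite <- inv_bb by lra. replace (a1 / a2) with (/ (a2 / a1)) by (field; lra).
    apply Rinv_lt_contravar; [apply Rmult_lt_0_compat|]; try lra.
    apply Rdiv_lt_0_compat; lra. apply bb_pos; lra. }
  assert (Hp1' : p1 < 7).
  { unfold p1. apply Rmult_lt_reg_r with (2 * N - 3). lra.
    unfold Rdiv. rewrite Rmult_assoc, Rinv_l by lra. nra. }
  assert (Hq1p : 0 < q1).
  { unfold q1. apply Rdiv_lt_0_compat; nra. }
  assert (Hp : 0 < p) by (unfold p; apply Rdiv_lt_0_compat; lra).
  assert (HK : 0 < 7 * N + 15 - (N + 1) * p) by nra.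
  assert (Hz : a3 / a2 = (7 * N + 13 - q * (7 * N + 15 - (N + 1) * p)) / (N + 3)).
  { unfold p, q. apply Rmult_eq_reg_l with (N + 3). 2: lra.
    replace ((N + 3) * (a3 / a2)) with (((N + 3) * a3) / a2) by (field; lra).
    rewrite Hrec. field. repeat split; lra. }
  pose proof (lowcore N M HN HM HMM) as Hlow. simpl in Hlow.
  pose proof (upcore N M HN HM HMM) as Hup. simpl in Hup.
  replace (2 * (N + 1) - 3) with (2 * N - 1) in p0 by ring.
  replace (2 * (N + 2) - 3) with (2 * N + 1) in q1 by ring.
  assert (E0 : p0 = M * (2 * N + 2) / (2 * N - 1)) by (unfold p0; f_equal; ring).
  assert (E1 : q1 = M * (2 * N + 4) / (2 * N + 1)) by (unfold q1; f_equal; ring).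
  rewrite <- E0 in Hlow. rewrite <- E1 in Hup. fold p1 in Hup.
  rewrite Hz. split.
  - apply Rmult_lt_reg_l with (N + 3). lra.
    replace ((N + 3) * ((7 * N + 13 - q * (7 * N + 15 - (N + 1) * p)) / (N + 3)))
      with (7 * N + 13 - q * (7 * N + 15 - (N + 1) * p)) by (field; lra).
    assert (0 < (p0 - q) * (7 * N + 15 - (N + 1) * p)) by (apply Rmult_lt_0_compat; lra).
    assert (0 <= (N + 1) * p0 * (p - p0)) by (apply Rmult_le_pos; [apply Rmult_le_pos|]; lra).
    nra.
  - apply Rmult_lt_reg_l with (N + 3). lra.
    replace ((N + 3) * ((7 * N + 13 - q * (7 * N + 15 - (N + 1) * p)) / (N + 3)))
      with (7 * N + 13 - q * (7 * N + 15 - (N + 1) * p)) by (field; lra).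
    assert (0 < (q - q1) * (7 * N + 15 - (N + 1) * p)) by (apply Rmult_lt_0_compat; lra).
    assert (0 <= (N + 1) * q1 * (p1 - p)) by (apply Rmult_le_pos; [apply Rmult_le_pos|]; lra).
    nra.
Qed.

Lemma R0v : Rseq 0 = -1.
Proof. unfold Rseq, C. simpl. field. Qed.
Lemma R1v : Rseq 1 = 1.
Proof. unfold Rseq, C. simpl. field. Qed.
Lemma R2v : Rseq 2 = 7.
Proof. unfold Rseq, C. simpl. field. Qed.

Definition Ms : R := 3 - 2 * sqrt 2.

Lemma Ms_facts : Ms * Ms = 6 * Ms - 1 /\ 0.17157 < Ms < 0.171573.
Proof.
  unfold Ms. pose proof (sqrt_sqrt 2 ltac:(lra)) as H.
  pose proof (sqrt_pos 2).
  split. nra. split; nra.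
Qed.

Lemma bseq_bb n : (1 <= n)%nat -> bseq n = bb Ms (INR n).
Proof.
  intros Hn. unfold bseq, bb, Ms.
  pose proof (sqrt_sqrt 2 ltac:(lra)) as H. pose proof (sqrt_pos 2).
  assert (HN : 1 <= INR n) by (apply (le_INR 1); lia).
  assert (E : 3 * (41 * sqrt 2 + 58) = (9/2 + 3 * sqrt 2) * (14 * sqrt 2 + 20)).
  { replace ((9/2 + 3 * sqrt 2) * (14 * sqrt 2 + 20)) with (123 * sqrt 2 + 90 + 42 * (sqrt 2 * sqrt 2)) by field.
    rewrite H. ring. }
  rewrite E. field. lra.
Qed.

Lemma R3v : Rseq 3 = 25.
Proof. pose proof (recur 0) as H. rewrite R0v, R1v, R2v in H. simpl INR in H. lra. Qed.
Lemma R4v : Rseq 4 = 87.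
Proof. pose proof (recur 1) as H. rewrite R1v, R2v, R3v in H. simpl INR in H. lra. Qed.
Lemma R5v : Rseq 5 = 329.
Proof. pose proof (recur 2) as H. rewrite R2v, R3v, R4v in H. simpl INR in H. lra. Qed.
Lemma R6v : Rseq 6 = 1359.
Proof. pose proof (recur 3) as H. rewrite R3v, R4v, R5v in H. simpl INR in H. lra. Qed.

Definition Qm (m : nat) : Prop :=
  let n := (m + 4)%nat in
  0 < Rseq n /\ bb Ms (INR n) < rseq n < bb Ms (INR n + 1)
  /\ bb Ms (INR n + 1) < rseq (S n) < bb Ms (INR n + 2).

Lemma Q_all m : Qm m.
Proof.
  destruct Ms_facts as [HMM HM].
  induction m.
  - unfold Qm, rseq. simpl (0 + 4)%nat. rewrite R4v, R5v, R6v.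
    replace (INR 4) with 4 by (simpl; lra). unfold bb. lra.
  - unfold Qm in *. replace (S m + 4)%nat with (S (m + 4)) by lia.
    set (n := (m + 4)%nat) in *. destruct IHm as [Hp [[Hx1 Hx2] [Hy1 Hy2]]].
    assert (HN : 4 <= INR n) by (unfold n; rewrite plus_INR; pose proof (pos_INR m); simpl; lra).
    assert (Hb : forall t, 2 <= t -> 0 < bb Ms t).
    { intros t Ht. unfold bb. apply Rdiv_lt_0_compat; [apply Rmult_lt_0_compat|]; lra. }
    assert (Hp1 : 0 < Rseq (S n)).
    { unfold rseq in Hx1. pose proof (Hb (INR n) ltac:(lra)).
      assert (0 < Rseq (S n) / Rseq n) by lra.
      replace (Rseq (S n)) with (Rseq (S n) / Rseq n * Rseq n) by (field; lra).
      apply Rmult_lt_0_compat; lra. }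
    assert (Hp2 : 0 < Rseq (S (S n))).
    { unfold rseq in Hy1. pose proof (Hb (INR n + 1) ltac:(lra)).
      assert (0 < Rseq (S (S n)) / Rseq (S n)) by lra.
      replace (Rseq (S (S n))) with (Rseq (S (S n)) / Rseq (S n) * Rseq (S n)) by (field; lra).
      apply Rmult_lt_0_compat; lra. }
    rewrite S_INR. split; [exact Hp1|]. split.
    + replace (INR n + 1 + 1) with (INR n + 2) by ring. split; lra.
    + unfold rseq in *.
      pose proof (recur n) as Hrec.
      assert (Hrec' : (INR n + 3) * Rseq (S (S (S n))) = (7 * INR n + 13) * Rseq (S (S n))
          - (7 * INR n + 15) * Rseq (S n) + (INR n + 1) * Rseq n) by lra.
      pose proof (step_abs (INR n) Ms _ _ _ _ HN HM HMM Hp Hp1 Hp2 Hrec'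
         (conj Hx1 Hx2) (conj Hy1 Hy2)) as [Z1 Z2].
      replace (INR n + 1 + 1) with (INR n + 2) by ring.
      replace (INR n + 1 + 2) with (INR n + 3) by ring.
      split; assumption.
Qed.

Theorem lemma3p1 : forall n : nat, (3 <= n)%nat ->
  bseq n < rseq n /\ rseq n < bseq (S n).
Proof.
  intros n Hn. rewrite !bseq_bb by lia. rewrite S_INR.
  destruct Ms_facts as [HMM HM].
  destruct (Nat.eq_dec n 3) as [->|Hne].
  - unfold rseq. rewrite R3v, R4v. replace (INR 3) with 3 by (simpl; lra). unfold bb. lra.
  - destruct (Q_all (n - 4)) as [_ [H _]].
    replace (n - 4 + 4)%nat with n in H by lia. exact H.
Qed.
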